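(* (Elimination of bisimulation quantifiers.) For every formula $\phi$ of Full Modal Team Logic $\mathcal{FMTL}$ and every letter $p$, there is a formula $\theta\in\mathcal{FMTL}$ equivalent to $\tilde\exists p\,\phi$, i.e. for every team model $(M,X)$: $(M,X)\models\theta$ iff there is a team model $(N,Y)$ with $(N,Y)\rightleftharpoons_{\mathcal L(\phi)\setminus\{p\}}(M,X)$ and $(N,Y)\models\phi$.
   Context: Kripke models $M=(W,R,V)$, $V:W\to\mathcal P(Prop)$; team models $(M,X)$, $X\subseteq W$. Formulas of $\mathcal{FMTL}$: $p,\neg p,\bot,NE,\wedge,\otimes,\vee,\Diamond,\Box$, with team semantics: $(M,X)\models p$ iff $p\in V(s)$ for all $s\in X$; $\neg p$ iff $p\notin V(s)$ for all $s\in X$; $\bot$ iff $X=\emptyset$; $NE$ iff $X\neq\emptyset$; $\wedge$ componentwise; $\vee$: one disjunct holds; $\otimes$: $X=X_1\cup X_2$ with $(M,X_i)\models\phi_i$; $\Diamond\phi$: $(M,Y)\models\phi$ for some $Y$ such that every $x\in X$ has an $R$-successor in $Y$ and every $y\in Y$ is a successor of some $x\in X$; $\Box\phi$: $(M,R[X])\models\phi$, $R[X]$ the set of successors of elements of $X$. $\mathcal L(\phi)$ is the set of letters in $\phi$. For a set $\mathcal P$ of letters, $(M,w)\rightleftharpoons_{\mathcal P}(N,v)$: some relation containing $(w,v)$ has all pairs agreeing on $\mathcal P$ and satisfying forth and back conditions; $(M,X)\rightleftharpoons_{\mathcal P}(N,Y)$: each $x\in X$ is $\mathcal P$-bisimilar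 to some $y\in Y$ and vice versa. *)

(* Defs.v *)
From Stdlib Require Import List.
Import ListNotations.

Definition letter := nat.

Record kmodel := KModel {
  world : Type;
  rel : world -> world -> Prop;
  val : world -> letter -> Prop
}.

Definition team (M : kmodel) := world M -> Prop.

Inductive form : Type :=
| FAtom : letter -> form
| FNAtom : letter -> form
| FBot : form
| FNE : form
| FAnd : form -> form -> form
| FTensor : form -> form -> form
| FOr : form -> form -> form
| FDia : form -> form
| FBox : form -> form.

Definition image (M : kmodel) (X : team M) : team M :=
  fun y => exists x, X x /\ rel M x y.

Fixpoint sat (M : kmodel) (X : team M) (phi : form) : Prop :=
  match phi with
  | FAtom p => forall s, X s -> val M s p
  | FNAtom p => forall s, X s -> ~ val M s p
  | FBot => forall s, ~ X s
  | FNE => exists s, X s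
  | FAnd a b => sat M X a /\ sat M X b
  | FTensor a b => exists X1 X2 : team M,
      (forall s, X s <-> (X1 s \/ X2 s)) /\ sat M X1 a /\ sat M X2 b
  | FOr a b => sat M X a \/ sat M X b
  | FDia a => exists Y : team M,
      (forall x, X x -> exists y, Y y /\ rel M x y) /\
      (forall y, Y y -> exists x, X x /\ rel M x y) /\
      sat M Y a
  | FBox a => sat M (image M X) a
  end.

Fixpoint letters (phi : form) : list letter :=
  match phi with
  | FAtom p | FNAtom p => [p]
  | FBot | FNE => []
  | FAnd a b | FTensor a b | FOr a b => letters a ++ letters b
  | FDia a | FBox a => letters a
  end.

Definition state_bisim (P : letter -> Prop) (M : kmodel) (w : world M)
    (N : kmodel) (v : world N) : Prop :=
  exists Z : world M -> world N -> Prop,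
    Z w v /\
    forall a b, Z a b ->
      (forall q, P q -> (val M a q <-> val N b q)) /\
      (forall a', rel M a a' -> exists b', rel N b b' /\ Z a' b') /\
      (forall b', rel N b b' -> exists a', rel M a a' /\ Z a' b').

Definition team_bisim (P : letter -> Prop) (M : kmodel) (X : team M)
    (N : kmodel) (Y : team N) : Prop :=
  (forall x, X x -> exists y, Y y /\ state_bisim P M x N y) /\
  (forall y, Y y -> exists x, X x /\ state_bisim P M x N y).

(* Main.v *)
Require Import Defs.
From Stdlib Require Import List Lia Classical Arith.
Import ListNotations.

Fixpoint depth (f : form) : nat :=
  match f with
  | FDia a | FBox a => S (depth a)
  | FAnd a b | FTensor a b | FOr a b => Nat.max (depth a) (depth b)
  | _ => 0
  end.

Fixpoint kb (P : letter -> Prop) (k : nat) (M : kmodel) (w : world M)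
  (N : kmodel) (v : world N) : Prop :=
  (forall q, P q -> (val M w q <-> val N v q)) /\
  match k with
  | 0 => True
  | S k' =>
    (forall w', rel M w w' -> exists v', rel N v v' /\ kb P k' M w' N v') /\
    (forall v', rel N v v' -> exists w', rel M w w' /\ kb P k' M w' N v')
  end.

Definition tkb P k (M : kmodel) (X : team M) (N : kmodel) (Y : team N) :=
  (forall x, X x -> exists y, Y y /\ kb P k M x N y) /\
  (forall y, Y y -> exists x, X x /\ kb P k M x N y).

Lemma kb_atoms P k M w N v : kb P k M w N v -> forall q, P q -> (val M w q <-> val N v q).
Proof. destruct k; simpl; intros [H _]; exact H. Qed.

Lemma kb_down P k : forall M w N v, kb P (S k) M w N v -> kb P k M w N v.
Proof.
  induction k; intros M w N v H.
  - destruct H as [H _]; split; auto.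
  - destruct H as [Ha [Hf Hb]]; split; [exact Ha|split].
    + intros w' Hw'. destruct (Hf w' Hw') as [v' [? ?]]. eauto.
    + intros v' Hv'. destruct (Hb v' Hv') as [w' [? ?]]. eauto.
Qed.

Lemma kb_le P j k : j <= k -> forall M w N v, kb P k M w N v -> kb P j M w N v.
Proof. induction 1; intros; auto. apply IHle. apply kb_down. auto. Qed.

Lemma kb_mono (P P' : letter -> Prop) (HP : forall q, P' q -> P q) k :
  forall M w N v, kb P k M w N v -> kb P' k M w N v.
Proof.
  induction k; intros M w N v H.
  - destruct H as [H _]; split; auto.
  - destruct H as [Ha [Hf Hb]]; split; [auto|split].
    + intros w' Hw'. destruct (Hf w' Hw') as [v' [? ?]]. eauto.
    + intros v' Hv'. destruct (Hb v' Hv') as [w' [? ?]]. eauto.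
Qed.

Lemma tkb_gen P P' j k (HP : forall q, P' q -> P q) (Hjk : j <= k) M X N Y :
  tkb P k M X N Y -> tkb P' j M X N Y.
Proof.
  intros [H1 H2]; split.
  - intros x Hx; destruct (H1 x Hx) as [y [? ?]]; exists y; split; auto.
    eapply kb_mono; eauto; eapply kb_le; eauto.
  - intros y Hy; destruct (H2 y Hy) as [x [? ?]]; exists x; split; auto.
    eapply kb_mono; eauto; eapply kb_le; eauto.
Qed.

Lemma invariance : forall phi P k,
  (forall q, In q (letters phi) -> P q) -> depth phi <= k ->
  forall M X N Y, tkb P k M X N Y -> sat M X phi -> sat N Y phi.
Proof.
  induction phi; intros P k HL Hd M X N Y [T1 T2] Hs; simpl in *.
  - intros s Hy. destruct (T2 s Hy) as [x [Hx Hk]].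
    apply (kb_atoms _ _ _ _ _ _ Hk); auto.
  - intros s Hy. destruct (T2 s Hy) as [x [Hx Hk]].
    rewrite <- (kb_atoms _ _ _ _ _ _ Hk); auto.
  - intros s Hy. destruct (T2 s Hy) as [x [Hx Hk]]. eapply Hs; eauto.
  - destruct Hs as [s Hs]. destruct (T1 s Hs) as [y [? ?]]; eauto.
  - destruct Hs as [H1 H2]; split.
    + eapply IHphi1; [| |split; eauto|]; eauto. intros; apply HL; apply in_or_app; auto. lia.
    + eapply IHphi2; [| |split; eauto|]; eauto. intros; apply HL; apply in_or_app; auto. lia.
  - destruct Hs as [X1 [X2 [HX [H1 H2]]]].
    exists (fun y => Y y /\ exists x, X1 x /\ kb P k M x N y).
    exists (fun y => Y y /\ exists x, X2 x /\ kb P k M x N y).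
    split; [|split].
    + intros y; split.
      * intros Hy. destruct (T2 y Hy) as [x [Hx Hk]]. apply HX in Hx as [Hx|Hx]; [left|right]; split; eauto.
      * intros [[? _]|[? _]]; auto.
    + eapply IHphi1 with (P := P) (k := k) (X := X1); auto.
      intros; apply HL; apply in_or_app; auto. lia.
      split.
      * intros x Hx. destruct (T1 x (proj2 (HX x) (or_introl Hx))) as [y [? ?]]. exists y; split; [split|]; eauto.
      * intros y [_ [x [? ?]]]; eauto.
    + eapply IHphi2 with (P := P) (k := k) (X := X2); auto.
      intros; apply HL; apply in_or_app; auto. lia.
      split.
      * intros x Hx. destruct (T1 x (proj2 (HX x) (or_intror Hx))) as [y [? ?]]. exists y; split; [split|]; eauto.
      * intros y [_ [x [? ?]]]; eauto.
  - destruct Hs as [H|H].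
    + left. eapply IHphi1; [| |split; eauto|]; eauto. intros; apply HL; apply in_or_app; auto. lia.
    + right. eapply IHphi2; [| |split; eauto|]; eauto. intros; apply HL; apply in_or_app; auto. lia.
  - destruct k as [|k]; [lia|].
    destruct Hs as [Ym [F1 [F2 Hs]]].
    exists (fun b => (exists y, Y y /\ rel N y b) /\ exists a, Ym a /\ kb P k M a N b).
    split; [|split].
    + intros y Hy. destruct (T2 y Hy) as [x [Hx [_ [Kf Kb]]]].
      destruct (F1 x Hx) as [a [Ha Hr]]. destruct (Kf a Hr) as [b [Hb Hk]].
      exists b; split; [split; [exists y|exists a]|]; auto.
    + intros b [[y [? ?]] _]; eauto.
    + eapply IHphi with (P := P) (k := k) (X := Ym); auto. lia.
      split.
      * intros a Ha. destruct (F2 a Ha) as [x [Hx Hr]].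
        destruct (T1 x Hx) as [y [Hy [_ [Kf Kb]]]].
        destruct (Kf a Hr) as [b [Hb Hk]]. exists b; split; [split; [exists y|exists a]|]; auto.
      * intros b [_ [a [? ?]]]; eauto.
  - destruct k as [|k]; [lia|].
    eapply IHphi with (P := P) (k := k) (X := image M X); auto. lia.
    split.
    + intros a [x [Hx Hr]]. destruct (T1 x Hx) as [y [Hy [_ [Kf Kb]]]].
      destruct (Kf a Hr) as [b [Hb Hk]]. exists b; split; [exists y|]; eauto.
    + intros b [y [Hy Hr]]. destruct (T2 y Hy) as [x [Hx [_ [Kf Kb]]]].
      destruct (Kb b Hr) as [a [Ha Hk]]. exists a; split; [exists x|]; eauto.
Qed.

Lemma sb_kb P M w N v : state_bisim P M w N v -> forall k, kb P k M w N v.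
Proof.
  intros [Z [Hz HZ]] k. revert w v Hz. induction k; intros w v Hz;
  destruct (HZ w v Hz) as [Ha [Hf Hb]]; split; auto; split.
  - intros w' Hw'. destruct (Hf w' Hw') as [v' [? ?]]; eauto.
  - intros v' Hv'. destruct (Hb v' Hv') as [w' [? ?]]; eauto.
Qed.

Lemma tb_tkb P M X N Y : team_bisim P M X N Y -> forall k, tkb P k M X N Y.
Proof.
  intros [H1 H2] k; split.
  - intros x Hx; destruct (H1 x Hx) as [y [? ?]]; eauto using sb_kb.
  - intros y Hy; destruct (H2 y Hy) as [x [? ?]]; eauto using sb_kb.
Qed.

Definition aw (M N : kmodel) := (world M * option (world N * nat))%type.

Definition arel (P : letter -> Prop) (M N : kmodel) (w w' : aw M N) : Prop :=
  match w, w' with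
  | (m, Some (n, S j)), (m', Some (n', j')) =>
      rel M m m' /\ rel N n n' /\ j' = j /\ kb P j M m' N n'
  | (m, Some (n, 0)), (m', None) => rel M m m'
  | (m, None), (m', None) => rel M m m'
  | _, _ => False
  end.

Definition aval (P : letter -> Prop) (M N : kmodel) (w : aw M N) (q : letter) : Prop :=
  match w with
  | (m, Some (n, _)) => (P q /\ val M m q) \/ (~ P q /\ val N n q)
  | (m, None) => val M m q
  end.

Definition amal (P : letter -> Prop) (M N : kmodel) : kmodel := KModel (aw M N) (arel P M N) (aval P M N).

Lemma amal_bisim1 (P : letter -> Prop) (M N : kmodel) (w : aw M N) :
  (match snd w with Some (n, j) => kb P j M (fst w) N n | None => True end) ->
  state_bisim P (amal P M N) w M (fst w).
Proof.
  intros H.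
  exists (fun w m0 => fst w = m0 /\ match snd w with Some (n, j) => kb P j M m0 N n | None => True end).
  split; [auto|].
  intros [m o] m0 [Hm Hk]; simpl in Hm; subst m0; simpl in Hk.
  split; [|split].
  - intros q Hq; destruct o as [[n j]|]; simpl; [|tauto].
    split; [intros [[_ ?]|[? _]]; tauto| auto].
  - intros [m' o'] Hr. exists m'. simpl in Hr.
    destruct o as [[n [|j]]|]; destruct o' as [[n' j']|]; simpl in *; try contradiction.
    all: try (destruct Hr as [? [? [? ?]]]; subst); split; auto.
  - intros m' Hr.
    destruct o as [[n [|j]]|].
    + exists (m', None); simpl; auto.
    + destruct Hk as [_ [Kf _]]. destruct (Kf m' Hr) as [n' [? ?]].
      exists (m', Some (n', j)); simpl; auto.
    + exists (m', None); simpl; auto.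
Qed.

Lemma amal_bisim2 (P : letter -> Prop) (M N : kmodel) j : forall m n, kb P j M m N n ->
  kb (fun _ => True) j N n (amal P M N) (m, Some (n, j)).
Proof.
  induction j; intros m n Hk.
  - split; auto. intros q _; simpl. destruct (classic (P q)) as [Hq|Hq].
    + rewrite (kb_atoms _ _ _ _ _ _ Hk q Hq). tauto.
    + tauto.
  - split; [|split].
    + intros q _; simpl. destruct (classic (P q)) as [Hq|Hq].
      * rewrite (kb_atoms _ _ _ _ _ _ Hk q Hq). tauto.
      * tauto.
    + intros n' Hr. destruct Hk as [_ [_ Kb]]. destruct (Kb n' Hr) as [m' [? ?]].
      exists (m', Some (n', j)). simpl. split; auto.
    + intros [m' [[n' j']|]] Hr; simpl in Hr; try contradiction.
      destruct Hr as [? [? [? ?]]]; subst. exists n'; split; auto.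
Qed.



Definition single (M : kmodel) (w : world M) : team M := fun y => y = w.
Definition flat (c : form) := forall M (X : team M),
  sat M X c <-> (forall x, X x -> sat M (single M x) c).

Definition Ttrue := FOr FBot FNE.

Lemma Ttrue_sat M X : sat M X Ttrue.
Proof. simpl. destruct (classic (exists s, X s)); [right; auto| left].
  intros s Hs; apply H; eauto. Qed.

Lemma flat_Ttrue : flat Ttrue.
Proof. intros M X; split; intros; apply Ttrue_sat. Qed.

Lemma flat_atom q : flat (FAtom q).
Proof. intros M X; simpl; split.
  - intros H x Hx s Hs; rewrite Hs; auto.
  - intros H s Hs; apply (H s Hs); reflexivity. Qed.

Lemma flat_natom q : flat (FNAtom q).
Proof. intros M X; simpl; split.
  - intros H x Hx s Hs; rewrite Hs; auto.
  - intros H s Hs; apply (H s Hs); reflexivity. Qed.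

Lemma flat_bot : flat FBot.
Proof. intros M X; simpl; split.
  - intros H x Hx; exfalso; eapply H; eauto.
  - intros H s Hs; apply (H s Hs s); reflexivity. Qed.

Lemma flat_and a b : flat a -> flat b -> flat (FAnd a b).
Proof. unfold flat in *. intros Ha Hb M X; simpl; rewrite Ha, Hb; split.
  - intros [H1 H2] x Hx; split; auto.
  - intros H; split; intros x Hx; apply (H x Hx). Qed.

Lemma flat_empty c : flat c -> forall M, sat M (fun _ => False) c.
Proof. intros H M; apply H; contradiction. Qed.

Lemma tensor_char a b : flat a -> flat b -> forall M X,
  sat M X (FTensor a b) <-> (forall x, X x -> sat M (single M x) a \/ sat M (single M x) b).
Proof.
  unfold flat in *. intros Ha Hb M X; simpl; split.
  - intros [X1 [X2 [HX [H1 H2]]]] x Hx. apply HX in Hx as [Hx|Hx].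
    + left; rewrite Ha in H1; auto.
    + right; rewrite Hb in H2; auto.
  - intros H. exists (fun x => X x /\ sat M (single M x) a).
    exists (fun x => X x /\ sat M (single M x) b). split; [|split].
    + intros s; split.
      * intros Hs; destruct (H s Hs); auto.
      * intros [[? _]|[? _]]; auto.
    + apply Ha; intros x [_ ?]; auto.
    + apply Hb; intros x [_ ?]; auto.
Qed.

Lemma flat_tensor a b : flat a -> flat b -> flat (FTensor a b).
Proof.
  intros Ha Hb M X; rewrite tensor_char by auto; split.
  - intros H x Hx. apply tensor_char; auto. intros y Hy; unfold single in Hy; subst; auto.
  - intros H x Hx. specialize (H x Hx). rewrite tensor_char in H by auto. apply H. reflexivity.
Qed.

Lemma dia_char a : flat a -> forall M X,
  sat M X (FDia a) <-> (forall x, X x -> exists y, rel M x y /\ sat M (single M y) a).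
Proof.
  unfold flat in *. intros Ha M X; simpl; split.
  - intros [Y [F1 [F2 H]]] x Hx. destruct (F1 x Hx) as [y [Hy Hr]].
    exists y; split; auto. rewrite Ha in H; auto.
  - intros H. exists (fun y => exists x, X x /\ rel M x y /\ sat M (single M y) a).
    split; [|split].
    + intros x Hx; destruct (H x Hx) as [y [? ?]]; exists y; split; eauto.
    + intros y [x [? [? _]]]; eauto.
    + apply Ha; intros y [x [_ [_ ?]]]; auto.
Qed.

Lemma flat_dia a : flat a -> flat (FDia a).
Proof.
  intros Ha M X; rewrite dia_char by auto; split.
  - intros H x Hx. apply dia_char; auto. intros y Hy; unfold single in Hy; subst; auto.
  - intros H x Hx. specialize (H x Hx). rewrite dia_char in H by auto. apply H. reflexivity.
Qed.

Lemma box_char a : flat a -> forall M X,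
  sat M X (FBox a) <-> (forall x, X x -> forall y, rel M x y -> sat M (single M y) a).
Proof.
  unfold flat in *. intros Ha M X; simpl; rewrite Ha; split.
  - intros H x Hx y Hr; apply H; exists x; auto.
  - intros H y [x [? ?]]; eauto.
Qed.

Lemma flat_box a : flat a -> flat (FBox a).
Proof.
  intros Ha M X; rewrite box_char by auto; split.
  - intros H x Hx. apply box_char; auto. intros y Hy; unfold single in Hy; subst. eauto.
  - intros H x Hx. specialize (H x Hx). rewrite box_char in H by auto. apply H. reflexivity.
Qed.

Fixpoint tens (S : list form) : form :=
  match S with [] => FBot | s :: S' => FTensor s (tens S') end.
Fixpoint dias (S : list form) : form :=
  match S with [] => Ttrue | s :: S' => FAnd (FDia s) (dias S') end.

Lemma flat_tens S : (forall s, In s S -> flat s) -> flat (tens S).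
Proof. induction S; simpl; intros H. apply flat_bot. apply flat_tensor; auto. Qed.

Lemma flat_dias S : (forall s, In s S -> flat s) -> flat (dias S).
Proof. induction S; simpl; intros H. apply flat_Ttrue. apply flat_and; auto. apply flat_dia; auto. Qed.

Lemma tens_single S : (forall s, In s S -> flat s) -> forall M x,
  sat M (single M x) (tens S) <-> exists s, In s S /\ sat M (single M x) s.
Proof.
  induction S; intros H M x; cbn [tens dias In].
  - simpl; split; [intros Hs; exfalso; apply (Hs x); reflexivity| intros [? [[] _]]].
  - assert (Hf : forall s, In s S -> flat s) by (intros; apply H; right; auto).
    rewrite tensor_char by (try apply flat_tens; auto; apply H; simpl; auto).
    split.
    + intros Hx. destruct (Hx x eq_refl) as [Hs|Hs]; [eauto|].
      apply IHS in Hs as [s [? ?]]; eauto.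
    + intros [s [[<-|Hs] Hs']] y Hy; unfold single in Hy; subst; [left; auto|right].
      apply IHS; eauto.
Qed.

Lemma dias_single S : (forall s, In s S -> flat s) -> forall M x,
  sat M (single M x) (dias S) <-> forall s, In s S -> exists y, rel M x y /\ sat M (single M y) s.
Proof.
  induction S; intros H M x; cbn [tens dias In].
  - split; [intros _ s []| intros _; apply Ttrue_sat].
  - assert (Hf : forall s, In s S -> flat s) by (intros; apply H; right; auto).
    assert (E : sat M (single M x) (FAnd (FDia a) (dias S)) <-> sat M (single M x) (FDia a) /\ sat M (single M x) (dias S)) by reflexivity.
    rewrite E, dia_char, IHS by (auto; apply H; simpl; auto). split.
    + intros [H1 H2] s [<-|Hs]; auto. apply H1. reflexivity.
    + intros H1; split; auto. intros y Hy; unfold single in Hy; subst; auto.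
Qed.


Fixpoint tau (T : list form) : form :=
  match T with [] => FBot | t :: T' => FTensor (FAnd t FNE) (tau T') end.

Lemma tau_char T : (forall t, In t T -> flat t) -> forall M X,
  sat M X (tau T) <-> (forall x, X x -> exists t, In t T /\ sat M (single M x) t) /\
                      (forall t, In t T -> exists x, X x /\ sat M (single M x) t).
Proof.
  induction T as [|t T IH]; intros H M X.
  - simpl. split.
    + intros Hs; split; [intros x Hx; exfalso; eapply Hs; eauto | intros _ []].
    + intros [H1 _] s Hs. destruct (H1 s Hs) as [? [[] _]].
  - assert (Hf : forall s, In s T -> flat s) by (intros; apply H; right; auto).
    assert (Ht : flat t) by (apply H; left; auto).
    split.
    + intros [X1 [X2 [HX [[H1 [s Hs]] H2]]]].
      apply IH in H2; auto. destruct H2 as [A B]. split.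
      * intros x Hx. apply HX in Hx as [Hx|Hx].
        -- exists t; split; [left; auto|]. unfold flat in Ht. rewrite Ht in H1; auto.
        -- destruct (A x Hx) as [t' [? ?]]; exists t'; split; [right|]; auto.
      * intros t' [<-|Ht'].
        -- exists s; split; [apply HX; auto|]. unfold flat in Ht. rewrite Ht in H1; auto.
        -- destruct (B t' Ht') as [x [? ?]]; exists x; split; [apply HX; auto|auto].
    + intros [A B].
      exists (fun x => X x /\ sat M (single M x) t).
      exists (fun x => X x /\ exists t', In t' T /\ sat M (single M x) t').
      split; [|split; [split|]].
      * intros x; split.
        -- intros Hx. destruct (A x Hx) as [t' [[<-|Ht'] Hs]]; [left|right]; eauto.
        -- intros [[? _]|[? _]]; auto.
      * unfold flat in Ht; rewrite Ht. intros x [_ ?]; auto.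
      * destruct (B t (or_introl eq_refl)) as [x [? ?]]; exists x; auto.
      * apply IH; auto. split.
        -- intros x [_ ?]; auto.
        -- intros t' Ht'. destruct (B t' (or_intror Ht')) as [x [? ?]]; exists x; eauto.
Qed.

Lemma tau_letters T (L : letter -> Prop) : (forall t, In t T -> forall q, In q (letters t) -> L q) ->
  forall q, In q (letters (tau T)) -> L q.
Proof.
  induction T; simpl; intros H q Hq; [contradiction|].
  rewrite app_nil_r in Hq. apply in_app_or in Hq as [Hq|Hq]; eauto.
Qed.

Fixpoint ors (G : list (list form)) : form :=
  match G with [] => FAnd FBot FNE | T :: G' => FOr (tau T) (ors G') end.

Lemma ors_char G M X : sat M X (ors G) <-> exists T, In T G /\ sat M X (tau T).
Proof.
  induction G; simpl.
  - split; [intros [H [s Hs]]; exfalso; eapply H; eauto| intros [? [[] _]]].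
  - rewrite IHG. split.
    + intros [H|[T [? ?]]]; eauto.
    + intros [T [[<-|?] ?]]; eauto.
Qed.

Fixpoint sublists {A} (L : list A) : list (list A) :=
  match L with [] => [[]] | a :: l => map (cons a) (sublists l) ++ sublists l end.

Lemma sublists_incl {A} (L : list A) : forall S, In S (sublists L) -> forall s, In s S -> In s L.
Proof.
  induction L; simpl; intros S HS s Hs.
  - destruct HS as [<-|[]]; contradiction.
  - apply in_app_or in HS as [HS|HS].
    + apply in_map_iff in HS as [S' [<- HS']]. destruct Hs as [<-|Hs]; eauto.
    + eauto.
Qed.

Lemma sub_filter {A} (L : list A) (Q : A -> Prop) :
  exists L', In L' (sublists L) /\ forall a, In a L' <-> In a L /\ Q a.
Proof.
  induction L as [|a l IH].
  - exists []; simpl; split; auto. intros b; split; [intros []| intros [[] _]].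
  - destruct IH as [L' [HL HI]]. destruct (classic (Q a)) as [Hq|Hq].
    + exists (a :: L'); split.
      * simpl; apply in_or_app; left; apply in_map; auto.
      * intros b; simpl; rewrite HI; split.
        -- intros [<-|[? ?]]; auto.
        -- intros [[<-|?] ?]; auto.
    + exists L'; split.
      * simpl; apply in_or_app; right; auto.
      * intros b; simpl; rewrite HI; split.
        -- intros [? ?]; auto.
        -- intros [[<-|?] ?]; [contradiction|auto].
Qed.

Fixpoint vf (Ps : list letter) : list form :=
  match Ps with
  | [] => [Ttrue]
  | q :: Ps' => map (FAnd (FAtom q)) (vf Ps') ++ map (FAnd (FNAtom q)) (vf Ps')
  end.

Lemma vf_flat Ps : forall c, In c (vf Ps) -> flat c.
Proof.
  induction Ps; simpl; intros c Hc.
  - destruct Hc as [<-|[]]; apply flat_Ttrue.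
  - apply in_app_or in Hc as [Hc|Hc]; apply in_map_iff in Hc as [c' [<- Hc']];
    apply flat_and; auto using flat_atom, flat_natom.
Qed.

Lemma vf_letters Ps : forall c, In c (vf Ps) -> forall q, In q (letters c) -> In q Ps.
Proof.
  induction Ps; simpl; intros c Hc q Hq.
  - destruct Hc as [<-|[]]; simpl in Hq; contradiction.
  - apply in_app_or in Hc as [Hc|Hc]; apply in_map_iff in Hc as [c' [<- Hc']];
    simpl in Hq; destruct Hq as [<-|Hq]; eauto.
Qed.

Lemma vf_exists Ps M w : exists c, In c (vf Ps) /\ sat M (single M w) c.
Proof.
  induction Ps as [|q Ps IH]; simpl.
  - exists Ttrue; split; auto. apply Ttrue_sat.
  - destruct IH as [c [Hc Hs]]. destruct (classic (val M w q)) as [Hv|Hv].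
    + exists (FAnd (FAtom q) c); split.
      * apply in_or_app; left; apply in_map; auto.
      * split; auto. intros s Hs'; unfold single in Hs'; subst; auto.
    + exists (FAnd (FNAtom q) c); split.
      * apply in_or_app; right; apply in_map; auto.
      * split; auto. intros s Hs'; unfold single in Hs'; subst; auto.
Qed.

Lemma vf_agree Ps : forall c, In c (vf Ps) -> forall M w N v,
  sat M (single M w) c -> sat N (single N v) c -> forall q, In q Ps -> (val M w q <-> val N v q).
Proof.
  induction Ps as [|q0 Ps IH]; simpl; intros c Hc M w N v H1 H2 q Hq; [contradiction|].
  apply in_app_or in Hc as [Hc|Hc]; apply in_map_iff in Hc as [c' [<- Hc']];
  destruct H1 as [A1 B1]; destruct H2 as [A2 B2]; simpl in A1, A2.
  - destruct Hq as [<-|Hq].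
    + split; intros _; [apply A2|apply A1]; reflexivity.
    + eapply IH; eauto.
  - destruct Hq as [<-|Hq].
    + split; intros Hv; exfalso; [apply (A1 w)|apply (A2 v)]; auto; reflexivity.
    + eapply IH; eauto.
Qed.

Definition mk (v : form) (S : list form) : form := FAnd v (FAnd (FBox (tens S)) (dias S)).

Fixpoint C (Ps : list letter) (k : nat) : list form :=
  match k with
  | 0 => vf Ps
  | S k' => flat_map (fun v => map (mk v) (sublists (C Ps k'))) (vf Ps)
  end.

Lemma C_inv Ps k c : In c (C Ps (S k)) ->
  exists v S, c = mk v S /\ In v (vf Ps) /\ In S (sublists (C Ps k)).
Proof.
  simpl; intros H. apply in_flat_map in H as [v [Hv H]].
  apply in_map_iff in H as [S [<- HS]]. eauto.
Qed.

Lemma C_flat Ps k : forall c, In c (C Ps k) -> flat c.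
Proof.
  induction k; intros c Hc.
  - apply (vf_flat Ps); auto.
  - apply C_inv in Hc as [v [S [-> [Hv HS]]]].
    assert (HF : forall s, In s S -> flat s) by (intros; apply IHk; eapply sublists_incl; eauto).
    unfold mk. apply flat_and; [eapply vf_flat; eauto|].
    apply flat_and; [apply flat_box; apply flat_tens; auto| apply flat_dias; auto].
Qed.

Lemma C_letters Ps k : forall c, In c (C Ps k) -> forall q, In q (letters c) -> In q Ps.
Proof.
  induction k; intros c Hc q Hq.
  - eapply vf_letters; eauto.
  - apply C_inv in Hc as [v [S [-> [Hv HS]]]].
    assert (HF : forall s, In s S -> forall q, In q (letters s) -> In q Ps)
      by (intros; eapply IHk; [eapply sublists_incl|]; eauto).
    unfold mk in Hq; simpl in Hq.
    apply in_app_or in Hq as [Hq|Hq]; [eapply vf_letters; eauto|].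
    apply in_app_or in Hq as [Hq|Hq].
    + clear - HF Hq. induction S; simpl in *; [contradiction|].
      apply in_app_or in Hq as [Hq|Hq]; eauto.
    + clear - HF Hq. induction S; simpl in *; [contradiction|].
      apply in_app_or in Hq as [Hq|Hq]; eauto.
Qed.

Lemma mk_sat v S M w : flat v -> (forall s, In s S -> flat s) ->
  (sat M (single M w) (mk v S) <->
   sat M (single M w) v /\ (forall y, rel M w y -> exists s, In s S /\ sat M (single M y) s)
   /\ (forall s, In s S -> exists y, rel M w y /\ sat M (single M y) s)).
Proof.
  intros Hv HS. unfold mk.
  assert (E : sat M (single M w) (FAnd v (FAnd (FBox (tens S)) (dias S))) <->
     sat M (single M w) v /\ sat M (single M w) (FBox (tens S)) /\ sat M (single M w) (dias S))
    by reflexivity.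
  rewrite E, box_char, dias_single by (auto using flat_tens).
  split.
  - intros [A [B D]]; split; [|split]; auto.
    intros y Hy. apply tens_single; auto. eapply B; eauto. reflexivity.
  - intros [A [B D]]; split; [|split]; auto.
    intros x Hx y Hy; unfold single in Hx; subst. apply tens_single; auto.
Qed.

Lemma C_exists Ps k M w : exists c, In c (C Ps k) /\ sat M (single M w) c.
Proof.
  revert w. induction k; intros w.
  - apply vf_exists.
  - destruct (vf_exists Ps M w) as [v [Hv Hsv]].
    destruct (sub_filter (C Ps k) (fun s => exists y, rel M w y /\ sat M (single M y) s))
      as [S [HS HI]].
    exists (mk v S). split.
    + simpl. apply in_flat_map. exists v; split; auto. apply in_map; auto.
    + assert (HF : forall s, In s S -> flat s) by (intros; eapply C_flat; apply HI; eauto).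
      apply mk_sat; auto. eapply vf_flat; eauto. split; [|split]; auto.
      * intros y Hy. destruct (IHk y) as [s [? ?]]. exists s; split; auto.
        apply HI; split; eauto.
      * intros s Hs. apply HI in Hs as [_ ?]; auto.
Qed.

Lemma C_kb Ps k : forall c, In c (C Ps k) -> forall M w N v,
  sat M (single M w) c -> sat N (single N v) c -> kb (fun q => In q Ps) k M w N v.
Proof.
  induction k; intros c Hc M w N v H1 H2.
  - split; auto. eapply vf_agree; eauto.
  - apply C_inv in Hc as [u [S [-> [Hu HS]]]].
    assert (HF : forall s, In s S -> flat s) by (intros; eapply C_flat; eapply sublists_incl; eauto).
    assert (HC : forall s, In s S -> In s (C Ps k)) by (intros; eapply sublists_incl; eauto).
    assert (Huf : flat u) by (eapply vf_flat; eauto).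
    apply mk_sat in H1 as [A1 [B1 D1]]; auto.
    apply mk_sat in H2 as [A2 [B2 D2]]; auto.
    split; [eapply vf_agree; eauto|split].
    + intros w' Hw'. destruct (B1 w' Hw') as [s [Hs Hs1]].
      destruct (D2 s Hs) as [v' [Hv' Hs2]]. exists v'; split; auto. eapply IHk; eauto.
    + intros v' Hv'. destruct (B2 v' Hv') as [s [Hs Hs2]].
      destruct (D1 s Hs) as [w' [Hw' Hs1]]. exists w'; split; auto. eapply IHk; eauto.
Qed.


Theorem mainTheorem9 :
  forall (phi : form) (p : letter),
  exists theta : form,
    forall (M : kmodel) (X : team M),
      sat M X theta <->
      exists (N : kmodel) (Y : team N),
        team_bisim (fun q => In q (letters phi) /\ q <> p) N Y M X /\
        sat N Y phi.
Proof.
  intros phi p.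
  set (P := fun q => In q (letters phi) /\ q <> p).
  set (Ps := filter (fun q => negb (Nat.eqb q p)) (letters phi)).
  assert (HPs : forall q, In q Ps <-> P q).
  { intros q. unfold Ps, P. rewrite filter_In, Bool.negb_true_iff, Nat.eqb_neq. tauto. }
  set (d := depth phi).
  set (good := fun T => exists (N : kmodel) (Y : team N), sat N Y (tau T) /\ sat N Y phi).
  destruct (sub_filter (sublists (C Ps d)) good) as [G [_ HG]].
  exists (ors G). intros M X. rewrite ors_char. split.
  - intros [T [HT Hs]]. apply HG in HT as [HT [N [Y [HtN Hphi]]]].
    assert (HF : forall t, In t T -> flat t)
      by (intros; eapply C_flat; eapply sublists_incl; eauto).
    assert (HC : forall t, In t T -> In t (C Ps d)) by (intros; eapply sublists_incl; eauto).
    apply tau_char in Hs as [A1 B1]; auto.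
    apply tau_char in HtN as [A2 B2]; auto.
    assert (Hk : tkb P d M X N Y).
    { split.
      - intros x Hx. destruct (A1 x Hx) as [t [Ht Hxt]]. destruct (B2 t Ht) as [y [Hy Hyt]].
        exists y; split; auto. eapply kb_mono; [|eapply C_kb; eauto].
        intros q; apply HPs.
      - intros y Hy. destruct (A2 y Hy) as [t [Ht Hyt]]. destruct (B1 t Ht) as [x [Hx Hxt]].
        exists x; split; auto. eapply kb_mono; [|eapply C_kb; eauto].
        intros q; apply HPs. }
    exists (amal P M N).
    exists (fun w : aw M N => match w with
                   | (m, Some (n, j)) => X m /\ Y n /\ j = d /\ kb P d M m N n
                   | _ => False end).
    split.
    + split.
      * intros [m [[n j]|]] Hw; [|contradiction]. destruct Hw as [Hm [Hn [-> Hkb]]].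
        exists m; split; auto. apply (amal_bisim1 P M N (m, Some (n, d))); auto.
      * intros x Hx. destruct (proj1 Hk x Hx) as [y [Hy Hkb]].
        exists (x, Some (y, d)). split; [auto|].
        apply (amal_bisim1 P M N (x, Some (y, d))); auto.
    + eapply invariance with (P := fun _ => True) (k := d) (X := Y); auto.
      split.
      * intros y Hy. destruct (proj2 Hk y Hy) as [x [Hx Hkb]].
        exists (x, Some (y, d)). split; auto. apply amal_bisim2; auto.
      * intros [m [[n j]|]] Hw; [|contradiction]. destruct Hw as [Hm [Hn [-> Hkb]]].
        exists n; split; auto. apply amal_bisim2; auto.
  - intros [N [Y [Hb Hphi]]].
    destruct (sub_filter (C Ps d) (fun c => exists y, Y y /\ sat N (single N y) c))
      as [T [HTs HT]].
    assert (HF : forall t, In t T -> flat t) by (intros; eapply C_flat; apply HT; eauto).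
    assert (HtY : sat N Y (tau T)).
    { apply tau_char; auto. split.
      - intros y Hy. destruct (C_exists Ps d N y) as [c [Hc Hs]].
        exists c; split; auto. apply HT; eauto.
      - intros t Ht. apply HT in Ht as [_ ?]; auto. }
    exists T; split.
    + apply HG; split; auto. exists N, Y; auto.
    + eapply invariance with (P := P) (k := depth (tau T)) (X := Y); eauto.
      * apply tau_letters. intros t Ht q Hq. apply HPs.
        eapply C_letters; [apply HT; eauto| eauto].
      * apply tb_tkb; auto.
Qed.
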